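(* Let $(M,J,\Theta)$ be a 3-dimensional pseudohermitian manifold with vanishing torsion and constant Webster scalar curvature $W$, and let $\Sigma\subset M$ be a surface. On any open set of nonsingular points of $\Sigma$ where $H_{cr}\neq0$, the function $\mathfrak f$ defined below satisfies $$|H_{cr}|\mathfrak f=e_1(H)H_{cr}+\tfrac32V(H_{cr})+\tfrac12He_1(H_{cr})-\alpha HH_{cr},$$ and the first-variation density $\mathcal E_1$ can be rewritten as $$\mathcal E_1=|H_{cr}|^{-1/2}\Big\{-\tfrac14\operatorname{sign}(H_{cr})\,\mathfrak f\,e_1(H_{cr})+\tfrac12e_1(|H_{cr}|\mathfrak f)+\tfrac32|H_{cr}|\mathfrak f\alpha+H_{cr}\big[\tfrac92V(\alpha)+3HH_{cr}-\tfrac16H^3\big]\Big\}.$$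
   Context: $\xi=\ker\Theta$, $T$ the Reeb field. At nonsingular points of $\Sigma$ ($T\Sigma\neq\xi$), $e_1$ is a unit vector (w.r.t. $\frac12d\Theta(\cdot,J\cdot)$) spanning $T\Sigma\cap\xi$, $e_2=Je_1$, $\alpha$ is the deviation function defined by $V:=T+\alpha e_2\in T\Sigma$, and $H$ is the $p$-mean curvature. Define $H_{cr}:=e_1(\alpha)+\frac12\alpha^2+\frac16H^2+\frac14W$ and $$\mathfrak f:=|H_{cr}|^{-1}\Big\{e_1(H)\big(e_1(\alpha)+\tfrac12\alpha^2+\tfrac13H^2+\tfrac14W\big)+HV(H)+\tfrac32V\big(e_1(\alpha)+\tfrac12\alpha^2\big)-\tfrac72\alpha He_1(\alpha)-\tfrac52\alpha^3H-\tfrac23\alpha H^3-\tfrac54\alpha HW\Big\},$$ $$\mathcal E_1:=\tfrac12e_1(|H_{cr}|^{1/2}\mathfrak f)+\tfrac32|H_{cr}|^{1/2}\alpha\mathfrak f+\tfrac12\operatorname{sign}(H_{cr})|H_{cr}|^{1/2}\{9V(\alpha)+6HH_{cr}-\tfrac13H^3\}.$$ In such a manifold the Codazzi-like equation $e_1e_1(\alpha)=-6\alpha e_1(\alpha)+V(H)-\alpha H^2-4\alpha^3-2W\alpha$ holds. *)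

(* Defs.v *)
From HB Require Import structures.
From mathcomp Require Import all_boot all_order all_algebra.
From mathcomp Require Import all_classical all_reals all_analysis.
Set Implicit Arguments. Unset Strict Implicit. Unset Printing Implicit Defensive.
Import Order.TTheory GRing.Theory Num.Theory.
Import numFieldNormedType.Exports.
Local Open Scope ring_scope.
Local Open Scope classical_set_scope.

(* Local model of the nonsingular part of the surface: an open set of a
   coordinate chart 'rV[R]_2.  Functions on the surface are maps 'rV[R]_2 -> R,
   tangent vector fields are maps 'rV[R]_2 -> 'rV[R]_2. *)
Notation pt R := ('rV[R]_2).

CoInductive smooth_on (R : realType) (U : set (pt R)) (f : pt R -> R) : Prop :=
  SmoothOn : (forall p, U p -> differentiable f p) ->
             (forall v : pt R, smooth_on U (fun p => 'D_v f p)) ->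
             smooth_on U f.

Definition smooth_vf (R : realType) (U : set (pt R)) (X : pt R -> pt R) : Prop :=
  forall i : 'I_2, smooth_on U (fun p => X p ord0 i).

Definition vf (R : realType) (X : pt R -> pt R) (f : pt R -> R) : pt R -> R :=
  fun p => 'D_(X p) f p.

Definition Hcr (R : realType) (e1 : pt R -> pt R) (alpha H : pt R -> R) (W : R)
  : pt R -> R :=
  fun p => vf e1 alpha p + alpha p ^+ 2 / 2 + H p ^+ 2 / 6 + W / 4.

Definition frakf (R : realType) (e1 V : pt R -> pt R) (alpha H : pt R -> R) (W : R)
  : pt R -> R :=
  fun p => (`|Hcr e1 alpha H W p|)^-1 *
    ( vf e1 H p * (vf e1 alpha p + alpha p ^+ 2 / 2 + H p ^+ 2 / 3 + W / 4)
    + H p * vf V H p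
    + 3 / 2 * vf V (fun q => vf e1 alpha q + alpha q ^+ 2 / 2) p
    - 7 / 2 * alpha p * H p * vf e1 alpha p
    - 5 / 2 * alpha p ^+ 3 * H p
    - 2 / 3 * alpha p * H p ^+ 3
    - 5 / 4 * alpha p * H p * W ).

Definition E1 (R : realType) (e1 V : pt R -> pt R) (alpha H : pt R -> R) (W : R)
  : pt R -> R :=
  fun p =>
    let hc := Hcr e1 alpha H W in
    let f := frakf e1 V alpha H W in
    1 / 2 * vf e1 (fun q => Num.sqrt `|hc q| * f q) p
    + 3 / 2 * Num.sqrt `|hc p| * alpha p * f p
    + 1 / 2 * Num.sg (hc p) * Num.sqrt `|hc p| *
        (9 * vf V alpha p + 6 * H p * hc p - H p ^+ 3 / 3).

(* Main.v *)
Require Import Defs.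
From HB Require Import structures.
From mathcomp Require Import all_boot all_order all_algebra.
From mathcomp Require Import all_classical all_reals all_analysis.
From mathcomp Require Import ring lra.
Import Order.TTheory GRing.Theory Num.Theory.
Import numFieldNormedType.Exports.
Local Open Scope ring_scope.
Local Open Scope classical_set_scope.

Section Loc.
Context {R : realType}.
Implicit Types f g h : pt R -> R.

Lemma near0_differentiable h (a : pt R) : (\forall x \near a, h x = 0) ->
  differentiable h a.
Proof.
move=> h0.
have ha : h a = 0 := nbhs_singleton h0.
have dh : 'd h a = \0 :> (pt R -> R).
  apply: diff_unique; first exact: cst_continuous.
  apply/eqaddoP => _/posnumP[e].
  rewrite (near_shift (0 : pt R) a) in h0.
  near=> y.
  rewrite !fctE /= ha addr0 subr0.
  have -> : h (y + a) = 0.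
    near: y; apply: filterS h0 => y /=; by rewrite subr0.
  by rewrite normr0 mulr_ge0.
apply/diff_locallyP; rewrite dh; split; first exact: cst_continuous.
apply/eqaddoP => _/posnumP[e].
rewrite (near_shift (0 : pt R) a) in h0.
near=> y.
rewrite !fctE /= ha addr0 subr0.
have -> : h (y + a) = 0.
  near: y; apply: filterS h0 => y /=; by rewrite subr0.
by rewrite normr0 mulr_ge0.
Unshelve. all: by end_near. Qed.


Lemma near_eq_differentiable f g (a : pt R) : (\forall x \near a, f x = g x) ->
  differentiable f a -> differentiable g a.
Proof.
move=> fg df.
have -> : g = f + (g - f) by apply/funext => x /=; rewrite addrC subrK.
apply: differentiableD => //; apply: near0_differentiable.
by apply: filterS fg => x /= fgx; rewrite !fctE fgx subrr.
Qed.

Variable U : set (pt R).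
Hypothesis oU : open U.

Lemma nearU (q : pt R) : U q -> \forall x \near q, U x.
Proof. by move=> Uq; apply: open_nbhs_nbhs; split. Qed.

Inductive Alg : (pt R -> R) -> Prop :=
| Abase f : smooth_on U f -> Alg f
| Acst (c : R) : Alg (fun _ => c)
| Aadd f g : Alg f -> Alg g -> Alg (fun q => f q + g q)
| Amul f g : Alg f -> Alg g -> Alg (fun q => f q * g q)
| Aext f g : Alg f -> (forall q, U q -> f q = g q) -> Alg g.
Arguments Abase {f}. Arguments Aadd {f g}. Arguments Amul {f g}. Arguments Aext {f g}.

Lemma Alg_diff f : Alg f -> forall q, U q -> differentiable f q.
Proof.
elim=> {f}.
- by move=> f [].
- by move=> c q _; exact: differentiable_cst.
- by move=> f g _ df _ dg q Uq; apply: differentiableD; [apply: df|apply: dg].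
- by move=> f g _ df _ dg q Uq; apply: differentiableM; [apply: df|apply: dg].
- move=> f g _ df fg q Uq; apply: (@near_eq_differentiable f g q _ (df q Uq)).
  by move: (nearU q Uq); apply: filterS => x; apply: fg.
Qed.

Lemma Alg_derivable f q v : Alg f -> U q -> derivable f q v.
Proof. by move=> Af Uq; apply: diff_derivable; apply: Alg_diff. Qed.
Arguments Alg_derivable {f q}.

Lemma Alg_D f : Alg f -> forall v, Alg (fun q => 'D_v f q).
Proof.
move=> Af; elim: Af => {f}.
- by move=> f [_ Hs] v; apply: Abase; apply: Hs.
- move=> c v; apply: (Aext (Acst 0)) => q _.
  by rewrite (derive_cst c).
- move=> f g Af IHf Ag IHg v; apply: (Aext (Aadd (IHf v) (IHg v))) => q Uq.
  by rewrite (deriveD (Alg_derivable v Af Uq) (Alg_derivable v Ag Uq)).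
- move=> f g Af IHf Ag IHg v.
  apply: (Aext (Aadd (Amul Af (IHg v)) (Amul Ag (IHf v)))) => q Uq.
  by rewrite (deriveM (Alg_derivable v Af Uq) (Alg_derivable v Ag Uq)).
- move=> f g Af IHf fg v; apply: (Aext (IHf v)) => q Uq.
  apply: near_eq_derive; move: (nearU q Uq); apply: filterS => x; apply: fg.
Qed.

Arguments Alg_D {f}. Arguments Alg_diff {f}.
Lemma row2_decomp (v : pt R) :
  v = v ord0 ord0 *: delta_mx ord0 ord0 + v ord0 (lift ord0 ord0) *: delta_mx ord0 (lift ord0 ord0).
Proof.
apply/rowP => j; rewrite !mxE /=.
case: j => [[|[|//]]] Hj /=.
- rewrite !mulr1 !mulr0 addr0; congr (v _ _); exact/val_inj.
- rewrite !mulr1 !mulr0 add0r; congr (v _ _); exact/val_inj.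
Qed.

Lemma Alg_vf (X : pt R -> pt R) g : (forall i, Alg (fun p => X p ord0 i)) -> Alg g ->
  Alg (vf X g).
Proof.
move=> AX Ag.
apply: (Aext (Aadd (Amul (AX ord0) (Alg_D Ag (delta_mx ord0 ord0)))
                   (Amul (AX (lift ord0 ord0)) (Alg_D Ag (delta_mx ord0 (lift ord0 ord0)))))).
move=> q Uq; rewrite /vf.
have dg := Alg_diff Ag q Uq.
rewrite !(deriveE _ dg) {3}(row2_decomp (X q)).
by rewrite linearD !linearZ.
Qed.

Lemma Aopp f : Alg f -> Alg (fun q => - f q).
Proof. by move=> Af; apply: (Aext (Amul (Acst (-1)) Af)) => q _; rewrite mulN1r. Qed.
Arguments Aopp {f}.
Lemma Asub f g : Alg f -> Alg g -> Alg (fun q => f q - g q).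
Proof. by move=> Af Ag; apply: (Aadd Af (Aopp Ag)). Qed.
Arguments Asub {f g}.
Lemma Aexp f n : Alg f -> Alg (fun q => f q ^+ n).
Proof.
move=> Af; elim: n => [|n IH]; first by apply: (Aext (Acst 1)) => q _; rewrite expr0.
by apply: (Aext (Amul Af IH)) => q _; rewrite exprS.
Qed.

Arguments Aexp {f}.
Section VF.
Variables (X : pt R -> pt R) (p : pt R).
Hypothesis Up : U p.

Lemma vfD f g : Alg f -> Alg g -> vf X (fun q => f q + g q) p = vf X f p + vf X g p.
Proof. by move=> Af Ag; rewrite /vf (deriveD (Alg_derivable _ Af Up) (Alg_derivable _ Ag Up)). Qed.
Lemma vfM f g : Alg f -> Alg g -> vf X (fun q => f q * g q) p = f p * vf X g p + g p * vf X f p.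
Proof. by move=> Af Ag; rewrite /vf (deriveM (Alg_derivable _ Af Up) (Alg_derivable _ Ag Up)). Qed.
Lemma vfC (c : R) : vf X (fun _ => c) p = 0.
Proof. by rewrite /vf (derive_cst c). Qed.
Lemma vfN f : Alg f -> vf X (fun q => - f q) p = - vf X f p.
Proof.
move=> Af; have -> : (fun q => - f q) = (fun q => (-1) * f q) by apply/funext => q; rewrite mulN1r.
rewrite vfM ?vfC //; last by apply: Acst.
by rewrite mulr0 addr0 mulN1r.
Qed.
Lemma vfB f g : Alg f -> Alg g -> vf X (fun q => f q - g q) p = vf X f p - vf X g p.
Proof. by move=> Af Ag; rewrite vfD ?vfN //; apply: Aopp. Qed.
Lemma vfX f n : Alg f -> vf X (fun q => f q ^+ n) p = n%:R * f p ^+ n.-1 * vf X f p.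
Proof.
move=> Af; case: n => [|n].
  have -> : (fun q => f q ^+ 0) = (fun _ => 1) by apply/funext=> q; rewrite expr0.
  by rewrite vfC mul0r mul0r.
elim: n => [|n IH].
  have -> : (fun q => f q ^+ 1) = f by apply/funext=> q; rewrite expr1.
  by rewrite /= expr0 !mul1r.
have -> : (fun q => f q ^+ n.+2) = (fun q => f q * f q ^+ n.+1).
  by apply/funext=> q; rewrite exprS.
rewrite vfM //; last exact: Aexp.
rewrite IH /=. rewrite !exprS. 
rewrite -[(n.+2)%:R]natr1 -[(n.+1)%:R]natr1. 
by rewrite !mulrDl !mul1r; ring.
Qed.
End VF.
End Loc.

Arguments Abase {R U f}. Arguments Aadd {R U f g}. Arguments Amul {R U f g}.
Arguments Aext {R U f g}. Arguments Alg_diff {R U} oU {f}.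
Arguments Aopp {R U f}. Arguments Asub {R U f g}. Arguments Aexp {R U f}.
Lemma scR (R : realType) (a b : R) : a *: b = a * b. Proof. by []. Qed.
Ltac alg := repeat first [ assumption | apply: Alg_vf | apply: Aadd | apply: Asub | apply: Amul | apply: Aopp | apply: Aexp | apply: Acst ].

Theorem proposition5p2 (R : realType) (U : set 'rV[R]_2)
  (e1 V : 'rV[R]_2 -> 'rV[R]_2) (alpha H : 'rV[R]_2 -> R) (W : R) :
  open U ->
  smooth_vf U e1 -> smooth_vf U V ->
  smooth_on U alpha -> smooth_on U H ->
  (forall p, U p -> Hcr e1 alpha H W p != 0) ->
  (* Codazzi-like equation (vanishing torsion, constant Webster curvature W) *)
  (forall p, U p ->
     vf e1 (vf e1 alpha) p =
       - 6 * alpha p * vf e1 alpha p + vf V H p - alpha p * H p ^+ 2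
       - 4 * alpha p ^+ 3 - 2 * W * alpha p) ->
  forall p, U p ->
    let hc := Hcr e1 alpha H W in
    let f := frakf e1 V alpha H W in
    `|hc p| * f p =
      vf e1 H p * hc p + 3 / 2 * vf V hc p + 1 / 2 * H p * vf e1 hc p
      - alpha p * H p * hc p
    /\
    E1 e1 V alpha H W p =
      (Num.sqrt `|hc p|)^-1 *
      ( - (1 / 4) * Num.sg (hc p) * f p * vf e1 hc p
        + 1 / 2 * vf e1 (fun q => `|hc q| * f q) p
        + 3 / 2 * `|hc p| * f p * alpha p
        + hc p * (9 / 2 * vf V alpha p + 3 * H p * hc p - H p ^+ 3 / 6) ).
Proof.
move=> oU se1 sV salpha sH hc0 cod p Up hc f.
have Aal : Alg U alpha by apply: Abase.
have AH : Alg U H by apply: Abase.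
have Ae1 : forall i, Alg U (fun q => e1 q ord0 i) by move=> i; apply: Abase.
have AV : forall i, Alg U (fun q => V q ord0 i) by move=> i; apply: Abase.
have Ahc : Alg U hc by rewrite /hc /Hcr; alg.
have hcp0 : hc p != 0 by apply: hc0.
split.
  rewrite /f /frakf mulrA mulfV ?normr_eq0 // mul1r.
  rewrite /hc /Hcr.
  rewrite !(vfD _ oU _ _ Up) //; try alg.
  rewrite !(vfM _ oU _ _ Up) //; try alg.
  rewrite !vfC (cod p Up) /=.
  by field.
pose F := fun q => `|hc q| * f q.
have AF : Alg U F.
  pose G := fun p => vf e1 H p * (vf e1 alpha p + alpha p ^+ 2 / 2 + H p ^+ 2 / 3 + W / 4)
    + H p * vf V H p
    + 3 / 2 * vf V (fun q => vf e1 alpha q + alpha q ^+ 2 / 2) p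
    - 7 / 2 * alpha p * H p * vf e1 alpha p
    - 5 / 2 * alpha p ^+ 3 * H p
    - 2 / 3 * alpha p * H p ^+ 3
    - 5 / 4 * alpha p * H p * W.
  have AG : Alg U G by rewrite /G; alg.
  apply: (Aext AG) => q Uq.
  by rewrite /F /f /frakf mulrA mulfV ?normr_eq0 ?mul1r //; apply: hc0.
pose sg := Num.sg (hc p).
have sgn : sg * hc p = `|hc p| by rewrite /sg -normrEsg.
have sg2 : sg * sg = 1 by rewrite /sg -expr2 sqr_sg hcp0.
have Ag : Alg U (fun q => sg * hc q) by apply: Amul; [apply: Acst|].
have pos : \forall q \near p, 0 < sg * hc q.
  have cg := differentiable_continuous (Alg_diff oU Ag p Up).
  apply: (@cvgr_gt R _ _ _ _ _ cg); by rewrite sgn normr_gt0.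
have Habs : \forall q \near p, sg * hc q = `|hc q|.
  apply: filterS pos => q /= hq.
  rewrite -[LHS]gtr0_norm // normrM /sg normr_sg hcp0 mul1r //.
have Dabs : vf e1 (fun q => `|hc q|) p = sg * vf e1 hc p.
  rewrite /vf -(near_eq_derive _ Habs) -/(vf e1 (fun q => sg * hc q) p).
  by rewrite (vfM _ oU _ _ Up) ?vfC ?mulr0 ?addr0 //; apply: Acst.
have dabs : differentiable (fun q => `|hc q|) p.
  exact: (near_eq_differentiable _ _ _ Habs (Alg_diff oU Ag p Up)).
pose s := fun q => Num.sqrt `|hc q|.
have sp : 0 < s p by rewrite /s sqrtr_gt0 normr_gt0.
have ds : differentiable s p.
  apply: (differentiable_comp dabs).
  apply/derivable1_diffP.
  have hp : 0 < `|hc p| by rewrite normr_gt0.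
  by case: (@is_derive1_sqrt R _ hp).
have ss : forall q, s q * s q = `|hc q| by move=> q; rewrite /s -expr2 sqr_sqrtr.
have s0 : s p != 0 by rewrite gt_eqF.
have dsv : derivable s p (e1 p) by apply: diff_derivable.
have Ds : vf e1 s p = sg * vf e1 hc p / (2 * s p).
  have : vf e1 (fun q => s q * s q) p = vf e1 (fun q => `|hc q|) p.
    by congr vf; apply/funext => q; apply: ss.
  rewrite Dabs /vf (deriveM dsv dsv) => <-.
  rewrite !scR.
  by field.
have dFv : derivable F p (e1 p) by apply: diff_derivable; apply: (Alg_diff oU AF).
have eqsf : (fun q => s q * f q) = (fun q => F q * (s q)^-1).
  apply/funext => q; rewrite /F -ss.
  case: (eqVneq (s q) 0) => [sq0|nz]; first by rewrite sq0 !mul0r.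
  by field.
have Dsf : vf e1 (fun q => Num.sqrt `|hc q| * f q) p =
    F p * (- (s p ^+ 2)^-1 * vf e1 s p) + (s p)^-1 * vf e1 F p.
  rewrite (_ : (fun q => Num.sqrt `|hc q| * f q) = (fun q => F q * (s q)^-1)); last exact: eqsf.
  rewrite /vf (deriveM dFv (derivableV s0 dsv)) (deriveV s0 dsv).
  by [].
rewrite /E1 /= -/hc -/f Dsf -/(s p) -/sg -/(F p).
rewrite -/F Ds.
have FP : F p = s p * s p * f p by rewrite /F ss.
have HP : hc p = sg * (s p * s p) by rewrite ss -sgn mulrA sg2 mul1r.
rewrite FP -(ss p) HP.
by field.
Qed.
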